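(* Let $G$ be a cycle on $n_2\geq 3$ vertices. Then the graph $G^{\dagger}$ (for any choice of pairing in its construction) is neutral.
   Context: All graphs are finite and simple. A leaf is a vertex of degree one. The leaf-connecting operation on a graph $G$ produces $G^{\dagger}$ as follows: (1) for each vertex $v$ of $G$, attach $d_v$ new pendant vertices (leaves) to $v$; (2) repeatedly join a pair of leaves by an edge until no leaf is left (so the new pendant vertices are paired up by a perfect matching). For a graph $G=(V,E)$ with $m=|E|\geq1$ and degrees $d_u$, the assortativity coefficient is $$r(G)=\frac{m^{-1}\sum_{e_{uv}\in E} d_{u}d_{v}-\Big[m^{-1}\sum_{e_{uv}\in E} \tfrac{1}{2}(d_{u}+d_{v})\Big]^{2}}{m^{-1}\sum_{e_{uv}\in E} \tfrac{1}{2}(d^{2}_{u}+d^{2}_{v})-\Big[m^{-1}\sum_{e_{uv}\in E} \tfrac{1}{2}(d_{u}+d_{v})\Big]^{2}},$$ sums over edges counting each edge once, defined whenever the denominator is nonzero; $G$ is neutral if $r(G)$ is defined and equals $0$. *)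

(* Defs.v *)
From mathcomp Require Import all_boot all_order all_algebra.
Set Implicit Arguments. Unset Strict Implicit. Unset Printing Implicit Defensive.
Import Order.TTheory GRing.Theory Num.Theory.

Definition simple_graph (V : finType) (E : rel V) : Prop :=
  (forall x y, E x y = E y x) /\ (forall x, E x x = false).

Definition deg (V : finType) (E : rel V) (x : V) : nat := #|[set y | E x y]|.

Definition edges (V : finType) (E : rel V) : {set {set V}} :=
  [set A : {set V} | (#|A| == 2) &&
     [forall x in A, forall y in A, (x != y) ==> E x y]].

Local Open Scope ring_scope.

Definition nedges (V : finType) (E : rel V) : nat := #|edges E|.

Definition assort_prod (V : finType) (E : rel V) : rat :=
  (nedges E)%:R^-1 * \sum_(A in edges E) \prod_(u in A) (deg E u)%:R.
Definition assort_mean (V : finType) (E : rel V) : rat :=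
  (nedges E)%:R^-1 * \sum_(A in edges E) (2%:R^-1 * \sum_(u in A) (deg E u)%:R).
Definition assort_sq (V : finType) (E : rel V) : rat :=
  (nedges E)%:R^-1 * \sum_(A in edges E) (2%:R^-1 * \sum_(u in A) ((deg E u)%:R ^+ 2)).

Definition assort_num (V : finType) (E : rel V) : rat :=
  assort_prod E - (assort_mean E) ^+ 2.
Definition assort_den (V : finType) (E : rel V) : rat :=
  assort_sq E - (assort_mean E) ^+ 2.

(* assortativity coefficient r(G) (meaningful when [assort_defined]) *)
Definition assortativity (V : finType) (E : rel V) : rat :=
  assort_num E / assort_den E.
Definition assort_defined (V : finType) (E : rel V) : bool :=
  (1 <= nedges E)%N && (assort_den E != 0).

Definition neutral (V : finType) (E : rel V) : Prop :=
  assort_defined E /\ assortativity E = 0.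

(* The new pendant vertices: d_v of them attached to each vertex v. *)
Definition pendant (T : finType) (e : rel T) : finType :=
  {v : T & 'I_(deg e v)}.

(* G^dagger, given the pairing p of the pendant vertices (a perfect matching,
   encoded as a fixed-point-free involution, see [is_pairing]).
   Vertices: old vertices (inl) and pendant vertices (inr). *)
Definition dagger (T : finType) (e : rel T) (p : pendant e -> pendant e)
  : rel (T + pendant e)%type :=
  fun x y =>
    match x, y with
    | inl u, inl v => e u v
    | inl u, inr a => u == tag a
    | inr a, inl u => tag a == u
    | inr a, inr b => p a == b
    end.

Definition is_pairing (P : finType) (p : P -> P) : Prop :=
  (forall x, p (p x) = x) /\ (forall x, p x != x).

Definition is_cycle (T : finType) (e : rel T) (n : nat) : Prop :=
  exists f : 'I_n -> T, bijective f /\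
    forall i j : 'I_n, e (f i) (f j) = ((i.+1 %% n == j)%N || (j.+1 %% n == i)%N).

(* Main.v *)
Require Import Defs.
From mathcomp Require Import all_boot all_order all_algebra.
From mathcomp Require Import zify ring lra.
Set Implicit Arguments. Unset Strict Implicit. Unset Printing Implicit Defensive.
Import Order.TTheory GRing.Theory Num.Theory.
Local Open Scope ring_scope.

Section EdgeSum.
Variables (V : finType) (E : rel V).
Hypothesis Esym : forall x y, E x y = E y x.
Hypothesis Eirr : forall x, E x x = false.

Lemma in_edges2 u v : E u v -> [set u; v] \in edges E.
Proof.
move=> Euv; have uv : u != v by apply/eqP=> h; rewrite h Eirr in Euv.
rewrite inE cards2 uv /=; apply/forallP=> x; apply/implyP; rewrite !inE.
move=> hx; apply/forallP=> y; apply/implyP; rewrite !inE => hy; apply/implyP.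
by case/orP: hx => /eqP->; case/orP: hy => /eqP-> //; rewrite ?eqxx // Esym.
Qed.

Lemma edgesP A : A \in edges E -> exists a b, [/\ a != b, E a b & A = [set a; b]].
Proof.
rewrite inE => /andP[/cards2P[a [b [ab ->]]] /forallP H].
exists a, b; split => //.
move: (H a); rewrite !inE eqxx /= => /forallP/(_ b); rewrite !inE eqxx orbT /=.
by rewrite ab.
Qed.

Lemma edge_sum (F : {set V} -> rat) :
  (\sum_(A in edges E) F A) *+ 2 = \sum_u \sum_(v | E u v) F [set u; v].
Proof.
rewrite pair_big_dep /=.
rewrite (partition_big (fun uv : V * V => [set uv.1; uv.2]) (mem (edges E))) /=;
  last by case=> u v /= /in_edges2.
rewrite -sumrMnl; apply: eq_bigr => A /edgesP [a [b [ab Eab ->]]].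
rewrite (eq_bigl (fun uv => (uv == (a,b)) || (uv == (b,a)))); last first.
  case=> u v /=; apply/idP/idP.
    case/andP=> Euv /eqP hs.
    have uv : u != v by apply/eqP=> h; rewrite h Eirr in Euv.
    have hu : u \in [set a; b] by rewrite -hs !inE eqxx.
    have hv : v \in [set a; b] by rewrite -hs !inE eqxx orbT.
    move: hu hv uv; rewrite !inE !xpair_eqE.
    by case/orP=> /eqP->; case/orP=> /eqP->; rewrite ?eqxx ?orbT.
  by case/orP=> /eqP[-> ->]; rewrite ?Eab ?eqxx //= Esym Eab setUC eqxx.
rewrite (bigD1 (a,b)) ?eqxx //= (eq_bigl (pred1 (b,a))); last first.
  case=> u v /=; rewrite !xpair_eqE.
  case: (eqVneq u a) => [->|_]; rewrite ?eqxx ?(negbTE ab) /=;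
    by case: (u == b); case: (v == a); case: (v == b).
by rewrite (big_pred1 (b,a)) //= setUC mulr2n.
Qed.
End EdgeSum.
Lemma sum_tag (T : finType) (e : rel T) (x : T) (c : rat) :
  \sum_(a : pendant e | tag a == x) c = c *+ deg e x.
Proof.
have := @big_tag rat 0 +%R T (fun v => 'I_(deg e v)) (fun _ _ => c) x.
rewrite sumr_const card_ord => ->.
by apply: eq_bigr => a /eqP h; rewrite (untagE _ _ h).
Qed.

Lemma modS_eq n i : (i < n)%N -> (i.+1 %% n = if i.+1 == n then 0 else i.+1)%N.
Proof.
move=> lt; case: eqP => [->|ne]; first by rewrite modnn.
by rewrite modn_small // ltn_neqAle; apply/andP; split; [apply/eqP|].
Qed.

Lemma modP_eq n i : (i < n)%N -> ((i + n.-1) %% n = if i == 0 then n.-1 else i.-1)%N.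
Proof.
move=> lt; case: eqP => [->|ne]; first by rewrite add0n modn_small //; lia.
have -> : (i + n.-1 = i.-1 + n)%N by lia.
by rewrite modnDr modn_small //; lia.
Qed.

Lemma cyc_arith n i j : (3 <= n)%N -> (i < n)%N -> (j < n)%N ->
  ((j.+1 %% n == i) = (j == (i + n.-1) %% n))%N /\ (i.+1 %% n != (i + n.-1) %% n)%N.
Proof.
move=> n3 lti ltj; rewrite modS_eq // modS_eq // modP_eq //.
split.
  by case: ifP => /eqP h1; case: ifP => /eqP h2; apply/eqP/eqP; lia.
by case: ifP => /eqP h1; case: ifP => /eqP h2; apply/eqP; lia.
Qed.
Section Cyc.
Variables (T : finType) (e : rel T) (n : nat) (f : 'I_n -> T).
Hypothesis n3 : (3 <= n)%N.
Hypothesis fbij : bijective f.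
Hypothesis fe : forall i j : 'I_n, e (f i) (f j) = ((i.+1 %% n == j)%N || (j.+1 %% n == i)%N).

Lemma cardT_cyc : #|T| = n.
Proof. by rewrite -(bij_eq_card fbij) card_ord. Qed.

Lemma fsurj x : exists i, x = f i.
Proof. case: fbij => g _ gK; by exists (g x); rewrite gK. Qed.

Lemma e_sym x y : e x y = e y x.
Proof. by case: (fsurj x) => i ->; case: (fsurj y) => j ->; rewrite !fe orbC. Qed.

Lemma e_irr x : e x x = false.
Proof.
case: (fsurj x) => i ->; rewrite fe orbb.
rewrite modS_eq //; case: ifP => /eqP h; apply/eqP; lia.
Qed.

Lemma deg_cyc x : deg e x = 2%N.
Proof.
case: (fsurj x) => i ->; rewrite /deg.
have n0 : (0 < n)%N by lia.
pose j1 := Ordinal (ltn_pmod i.+1 n0).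
pose j2 := Ordinal (ltn_pmod (i + n.-1) n0).
have -> : [set y | e (f i) y] = f @: [set j1; j2].
  apply/setP => y; rewrite inE; case: (fsurj y) => j ->.
  rewrite (mem_imset _ _ (bij_inj fbij)) fe !inE.
  have [h1 _] := cyc_arith n3 (ltn_ord i) (ltn_ord j).
  by rewrite h1 -!val_eqE /= eq_sym.
rewrite card_imset; last exact: bij_inj.
have [_ h2] := cyc_arith n3 (ltn_ord i) (ltn_ord i).
by rewrite cards2 -val_eqE /= h2.
Qed.
End Cyc.
Section Dag.
Variables (T : finType) (e : rel T) (p : pendant e -> pendant e).
Hypothesis esym : forall x y, e x y = e y x.
Hypothesis eirr : forall x, e x x = false.
Hypothesis edeg : forall x, deg e x = 2%N.
Hypothesis pp : forall x, p (p x) = x.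
Hypothesis pn : forall x, p x != x.

Local Notation E := (dagger p).

Lemma dag_sym x y : E x y = E y x.
Proof.
case: x => [u|a]; case: y => [v|b] //=; rewrite ?esym ?(eq_sym u) //.
by apply/eqP/eqP => <-.
Qed.

Lemma dag_irr x : E x x = false.
Proof. by case: x => [u|a] /=; rewrite ?eirr // (negbTE (pn a)). Qed.

Lemma sum_e x (c : rat) : \sum_(y | e x y) c = c *+ 2.
Proof. by rewrite -(edeg x) /deg -sumr_const; apply: eq_bigl => y; rewrite inE. Qed.

Lemma nbr_inl (g : (T + pendant e)%type -> rat) x :
  \sum_(v | E (inl x) v) g v = \sum_(y | e x y) g (inl y) + \sum_(a | tag a == x) g (inr a).
Proof. by rewrite big_sumType /=; congr (_ + _); apply: eq_bigl => a; rewrite eq_sym. Qed.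

Lemma nbr_inr (g : (T + pendant e)%type -> rat) a :
  \sum_(v | E (inr a) v) g v = g (inl (tag a)) + g (inr (p a)).
Proof.
rewrite big_sumType /= (big_pred1 (tag a)) ?(big_pred1 (p a)) //.
Qed.

Lemma deg_sum u : (deg E u)%:R = \sum_(v | E u v) (1 : rat).
Proof. by rewrite /deg -sumr_const; apply: eq_bigl => v; rewrite inE. Qed.

Local Notation D u := ((deg E u)%:R : rat).

Lemma D_inl x : D (inl x) = 4.
Proof. by rewrite deg_sum nbr_inl sum_e sum_tag edeg. Qed.

Lemma D_inr a : D (inr a) = 2.
Proof. by rewrite deg_sum nbr_inr. Qed.

Arguments dagger : simpl never.

Lemma HS (h : rat -> rat -> rat) :
  \sum_u \sum_(v | E u v) h (D u) (D v) =
  (h 4 4 *+ 2 + h 4 2 *+ 2 + (h 2 4 + h 2 2) *+ 2) *+ #|T|.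
Proof.
rewrite big_sumType /=.
rewrite (partition_big (fun a : pendant e => tag a) predT) //=.
rewrite -big_split /= -sumr_const; apply: eq_bigr => x _.
rewrite D_inl nbr_inl.
rewrite [in X in X + _ + _ = _](eq_bigr (fun _ => h 4 4)); last by move=> y _; rewrite D_inl.
rewrite [in X in _ + X + _ = _](eq_bigr (fun _ => h 4 2)); last by move=> y _; rewrite D_inr.
rewrite [in X in _ + X = _](eq_bigr (fun _ => h 2 4 + h 2 2)); last first.
  by move=> a _; rewrite D_inr nbr_inr D_inl D_inr.
by rewrite sum_e !sum_tag edeg.
Qed.

Lemma edge_val (F : {set (T + pendant e)%type} -> rat) (h : rat -> rat -> rat) :
  (forall u v, E u v -> F [set u; v] = h (D u) (D v)) ->
  (\sum_(A in edges E) F A) *+ 2 =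
  (h 4 4 *+ 2 + h 4 2 *+ 2 + (h 2 4 + h 2 2) *+ 2) *+ #|T|.
Proof.
move=> hF; rewrite edge_sum; [|exact: dag_sym|exact: dag_irr].
rewrite -HS; apply: eq_bigr => u _; apply: eq_bigr => v; exact: hF.
Qed.
End Dag.

Theorem lemma5 (T : finType) (e : rel T) (n : nat)
  (p : pendant e -> pendant e) :
  (3 <= n)%N -> is_cycle e n -> is_pairing p -> neutral (dagger p).
Proof.
move=> n3 [f [fbij fe]] [pp pn].
have esym := e_sym fbij fe.
have eirr := e_irr n3 fbij fe.
have edeg := deg_cyc n3 fbij fe.
have cardT := cardT_cyc fbij.
have n0 : (0 < n)%N := ltn_trans (isT : (0 < 2)%N) n3.
have N0 : (n%:R : rat) != 0 by rewrite pnatr_eq0 -lt0n.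
have EV := edge_val esym eirr edeg pp pn.
have hm : (nedges (dagger p))%:R = 4 * (n%:R : rat).
  have /(_ (fun _ _ _ => erefl (1 : rat))) := EV (fun _ => 1) (fun _ _ => 1).
  move=> h; rewrite sumr_const cardT in h; rewrite /nedges; lra.
have ne u v : dagger p u v -> u \notin [set v].
  by move=> Euv; rewrite inE; apply/eqP => uv; rewrite uv dag_irr in Euv.
have hp : \sum_(A in edges (dagger p)) \prod_(u in A) ((deg (dagger p) u)%:R : rat) = 36 * (n%:R : rat).
  have hyp : forall u v, dagger p u v -> (fun A => \prod_(u in A) ((deg (dagger p) u)%:R : rat)) [set u; v] = (fun a b => a * b) ((deg (dagger p) u)%:R) ((deg (dagger p) v)%:R).
    by move=> u v Euv /=; rewrite big_setU1 ?ne //= big_set1.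
  have h := EV (fun A => \prod_(u in A) ((deg (dagger p) u)%:R : rat)) (fun a b => a * b) hyp.
  rewrite /= cardT in h; lra.
have hmean : \sum_(A in edges (dagger p)) (2%:R^-1 * \sum_(u in A) ((deg (dagger p) u)%:R : rat)) = 12 * (n%:R : rat).
  have hyp : forall u v, dagger p u v -> (fun A => (2%:R^-1 * \sum_(u in A) ((deg (dagger p) u)%:R : rat))) [set u; v] = (fun a b => 2%:R^-1 * (a + b)) ((deg (dagger p) u)%:R) ((deg (dagger p) v)%:R).
    by move=> u v Euv /=; rewrite big_setU1 ?ne //= big_set1.
  have h := EV (fun A => (2%:R^-1 * \sum_(u in A) ((deg (dagger p) u)%:R : rat))) (fun a b => 2%:R^-1 * (a + b)) hyp.
  rewrite /= cardT in h; lra.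
have hsq : \sum_(A in edges (dagger p)) (2%:R^-1 * \sum_(u in A) ((deg (dagger p) u)%:R ^+ 2 : rat)) = 40 * (n%:R : rat).
  have hyp : forall u v, dagger p u v -> (fun A => (2%:R^-1 * \sum_(u in A) ((deg (dagger p) u)%:R ^+ 2 : rat))) [set u; v] = (fun a b => 2%:R^-1 * (a ^+ 2 + b ^+ 2)) ((deg (dagger p) u)%:R) ((deg (dagger p) v)%:R).
    by move=> u v Euv /=; rewrite big_setU1 ?ne //= big_set1.
  have h := EV (fun A => (2%:R^-1 * \sum_(u in A) ((deg (dagger p) u)%:R ^+ 2 : rat))) (fun a b => 2%:R^-1 * (a ^+ 2 + b ^+ 2)) hyp.
  rewrite /= cardT !expr2 in h; lra.
have hmn : nedges (dagger p) = (4 * n)%N.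
  by apply/eqP; rewrite -(eqr_nat rat) natrM hm.
rewrite /neutral /assort_defined /assortativity /assort_num /assort_den
  /assort_prod /assort_mean /assort_sq hm hp hmean hsq hmn.
have -> : (4 * n%:R)^-1 * (40 * n%:R) - ((4 * n%:R)^-1 * (12 * n%:R)) ^+ 2 = 1 :> rat.
  field; exact: N0.
have -> : (4 * n%:R)^-1 * (36 * n%:R) - ((4 * n%:R)^-1 * (12 * n%:R)) ^+ 2 = 0 :> rat.
  field; exact: N0.
split; last by rewrite mul0r.
by rewrite oner_eq0 andbT muln_gt0 n0.
Qed.
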